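(* Let $G=(V,E)$ be a finite connected directed graph with $(i,j)\in E$ if and only if $(j,i)\in E$, and write $\partial i=\{j\in V:(j,i)\in E\}$. Let $f=(f_{ij})_{(i,j)\in E}$ with each $f_{ij}:\mathbb{R}\to\mathbb{R}$ continuous and strictly increasing and $f_{ij}(x)=-f_{ji}(-x)$. Let $(\phi,\pi)$ and $(\phi^*,\pi^* )$, with $\phi,\phi^*:E\to\mathbb{R}$ skew-symmetric and $\pi,\pi^*:V\to\mathbb{R}$, satisfy $\sum_{j\in\partial i}\phi_{ji}+q_i=0$, $\sum_{j\in\partial i}\phi^*_{ji}+q^*_i=0$ for all $i\in V$, and $\pi_j-\pi_i=-f_{ij}(\phi_{ij})$, $\pi^*_j-\pi^*_i=-f_{ij}(\phi^*_{ij})$ for all $(i,j)\in E$, for productions $q,q^*:V\to\mathbb{R}$. Let $T\subset V$ be non-empty. If $\pi_t\ge\pi_t^*$ for all $t\in T$ and $q_i\ge q_i^*$ for all $i\in V\setminus T$, then $\pi_u\ge\pi_u^*$ for every $u\in V\setminus T$. Moreover, if $q_u>q_u^*$, then $\pi_u>\pi_u^*$. *)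

(* Defs.v *)
From HB Require Import structures.
From mathcomp Require Import all_boot all_order all_algebra.
From mathcomp Require Import all_classical all_reals all_analysis.
Set Implicit Arguments. Unset Strict Implicit. Unset Printing Implicit Defensive.
Import Order.TTheory GRing.Theory Num.Theory numFieldNormedType.Exports.
Local Open Scope ring_scope.

Definition sym_edges (V : finType) (e : rel V) : Prop :=
  forall i j : V, e i j = e j i.

Definition graph_connected (V : finType) (e : rel V) : Prop :=
  forall i j : V, connect e i j.

Definition admissible_f (R : realType) (V : finType) (e : rel V)
  (f : V -> V -> R -> R) : Prop :=
  forall i j : V, e i j ->
    [/\ continuous (f i j),
        {homo f i j : x y / x < y}
      & forall x : R, f i j x = - f j i (- x)].

Definition skew_flow (R : realType) (V : finType) (e : rel V)
  (phi : V -> V -> R) : Prop :=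
  forall i j : V, e i j -> phi i j = - phi j i.

Definition network_solution (R : realType) (V : finType) (e : rel V)
  (f : V -> V -> R -> R) (q : V -> R) (phi : V -> V -> R) (pi : V -> R) : Prop :=
  skew_flow e phi /\
  (forall i : V, \sum_(j | e j i) phi j i + q i = 0) /\
  (forall i j : V, e i j -> pi j - pi i = - f i j (phi i j)).

(* Main.v *)
Require Import Defs.
From HB Require Import structures.
From mathcomp Require Import all_boot all_order all_algebra.
From mathcomp Require Import all_classical all_reals all_analysis.
From mathcomp Require Import ring lra.
Import Order.TTheory GRing.Theory Num.Theory numFieldNormedType.Exports.
Local Open Scope ring_scope.

Theorem corollary1 (R : realType) (V : finType) (e : rel V)
  (f : V -> V -> R -> R) (q qs : V -> R)
  (phi phis : V -> V -> R) (pi pis : V -> R) (T : {set V}) :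
  sym_edges e -> graph_connected e -> admissible_f e f ->
  network_solution e f q phi pi ->
  network_solution e f qs phis pis ->
  T != finset.set0 ->
  (forall t : V, t \in T -> pis t <= pi t) ->
  (forall i : V, i \notin T -> qs i <= q i) ->
  forall u : V, u \notin T ->
    pis u <= pi u /\ (qs u < q u -> pis u < pi u).
Proof.
move=> hsym hconn hf [sk [fl po]] [sks [fls pos]] hT hTle hq.
pose d v := pi v - pis v.
pose g j i := phi j i - phis j i.
have edge_lt : forall j i, e j i -> d i < d j -> 0 < g j i.
  move=> j i eji hd; have [_ hm _] := hf j i eji.
  have h1 := po j i eji; have h2 := pos j i eji.
  rewrite subr_gt0; case: (ltrgtP (phis j i) (phi j i)) => // h.
    have := hm _ _ h; move: hd; rewrite /d => hd hh; lra.
  have hh : f j i (phis j i) = f j i (phi j i) by rewrite h.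
  move: hd; rewrite /d => hd; lra.
have edge_le : forall j i, e j i -> d i <= d j -> 0 <= g j i.
  move=> j i eji hd; have [_ hm _] := hf j i eji.
  have h1 := po j i eji; have h2 := pos j i eji.
  rewrite subr_ge0; case: (lerP (phis j i) (phi j i)) => // h.
  have := hm _ _ h; move: hd; rewrite /d => hd hh.
  have : pi i - pi j > pis i - pis j by rewrite h1 h2 ltrN2.
  lra.
have Sfl : forall i, \sum_(j | e j i) g j i + (q i - qs i) = 0.
  move=> i; rewrite /g sumrB; have := fl i; have := fls i; lra.
have dge0 : forall v, 0 <= d v.
  have [t tT] : exists t, t \in T.
    case: (set_0Vmem T) hT => [->|[t tT]] //; first by rewrite eqxx.
    by exists t.
  case: (arg_minP d (P := predT) (i0 := t) isT) => m _ hmin.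
  move=> v; rewrite leNgt; apply/negP => hv.
  have dm : d m < 0 by apply: (le_lt_trans (hmin v isT) hv).
  pose A := [set x | d x == d m].
  have Ad x : x \in A -> d x = d m by rewrite inE => /eqP.
  have notA x : x \notin A -> d m < d x.
    by rewrite inE lt_neqAle eq_sym => ->; rewrite hmin.
  have AnT x : x \in A -> x \notin T.
    move=> /Ad hx; apply/negP => /hTle h; rewrite /d in hx dm; lra.
  have mA : m \in A by rewrite inE.
  have tA : t \notin A.
    by apply/negP => /AnT; rewrite tT.
  have [j0 [i0 [ej jA iA]]] : exists j i, [/\ e j i, j \notin A & i \in A].
    apply: contrapT => hn.
    have cl : fingraph.closed e A.
      move=> x y exy; apply/idP/idP => hx; apply: contrapT => hy.
        by apply: hn; exists y, x; split => //; [rewrite hsym|apply/negP].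
      by apply: hn; exists x, y; split => //; apply/negP.
    have := closed_connect cl (hconn m t).
    by rewrite /= mA (negbTE tA).
  have Ssum : \sum_(i in A) (\sum_(j | e j i) g j i + (q i - qs i)) = 0.
    by rewrite big1 // => i _; apply: Sfl.
  rewrite big_split /= in Ssum.
  have Int : \sum_(i in A) \sum_(j in A | e j i) g j i = 0.
    rewrite (eq_bigr (fun i => \sum_(j in A) (if e j i then g j i else 0)));
      last by move=> i _; rewrite big_mkcondr.
    set S := LHS.
    have : S = - S.
      rewrite {1}/S exchange_big /= /S -sumrN; apply: eq_bigr => i _.
      rewrite -sumrN; apply: eq_bigr => j _.
      rewrite hsym; case eij: (e j i); last by rewrite oppr0.
      by rewrite /g (sk _ _ eij) (sks _ _ eij); ring.
    move=> h; have : S + S = 0 by rewrite {2}h subrr.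
    by rewrite -mulr2n => /eqP; rewrite mulrn_eq0 /= => /eqP.
  have split_in : forall i, \sum_(j | e j i) g j i =
      \sum_(j in A | e j i) g j i + \sum_(j | (j \notin A) && e j i) g j i.
    move=> i; rewrite (bigID (fun j => j \in A)) /=.
    by congr (_ + _); apply: eq_bigl => j; rewrite andbC.
  have Qge : 0 <= \sum_(i in A) (q i - qs i).
    by apply: sumr_ge0 => i /AnT /hq; rewrite subr_ge0.
  have Bgt : 0 < \sum_(i in A) \sum_(j | (j \notin A) && e j i) g j i.
    rewrite (bigD1 i0) //= (bigD1 j0) /=; last by rewrite jA ej.
    have h0 : 0 < g j0 i0.
      by apply: edge_lt => //; rewrite (Ad _ iA); apply: notA.
    have h1 : 0 <= \sum_(j | ((j \notin A) && e j i0) && (j != j0)) g j i0.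
      apply: sumr_ge0 => j /andP [/andP [jnA eji] _].
      by apply: edge_le => //; rewrite (Ad _ iA); apply/ltW/notA.
    have h2 : 0 <= \sum_(i in A | i != i0) \sum_(j | (j \notin A) && e j i) g j i.
      apply: sumr_ge0 => i /andP [iA' _]; apply: sumr_ge0 => j /andP [jnA eji].
      by apply: edge_le => //; rewrite (Ad _ iA'); apply/ltW/notA.
    lra.
  have : \sum_(i in A) \sum_(j | e j i) g j i =
     \sum_(i in A) \sum_(j in A | e j i) g j i +
     \sum_(i in A) \sum_(j | (j \notin A) && e j i) g j i.
    by rewrite -big_split /=; apply: eq_bigr => i _; apply: split_in.
  lra.
move=> u uT; split; first by have := dge0 u; rewrite /d subr_ge0.
move=> hqu; rewrite -subr_gt0 -/(d u) lt_neqAle dge0 andbT eq_sym.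
apply/negP => /eqP du.
have := Sfl u.
have : 0 <= \sum_(j | e j u) g j u.
  by apply: sumr_ge0 => j eju; apply: edge_le => //; rewrite du.
lra.
Qed.
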